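(* Let $a,b$ be real numbers with $b\ge a>1$. Then the functions $$W(t)=\sum_{j=0}^\infty a^{-j}\cos(b^jt),\qquad S(t)=\sum_{j=0}^\infty a^{-j}\sin(b^jt),\qquad t\in\mathbb{R},$$ are bounded and continuous on $\mathbb{R}$, but neither $W$ nor $S$ is differentiable at any point $t_0\in\mathbb{R}$. *)

(* Defs.v *)
From Stdlib Require Import Reals.
Open Scope R_scope.

Definition W_term (a b t : R) (j : nat) : R := / (a ^ j) * cos (b ^ j * t).
Definition S_term (a b t : R) (j : nat) : R := / (a ^ j) * sin (b ^ j * t).

Definition bounded_R (f : R -> R) : Prop := exists M : R, forall t : R, Rabs (f t) <= M.

Definition differentiable_at (f : R -> R) (x : R) : Prop :=
  exists l : R, derivable_pt_lim f x l.

(* Main.v *)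
Require Import Defs.
From Stdlib Require Import Reals Lra Lia ZArith.
From Coquelicot Require Import Coquelicot.
Open Scope R_scope.

Lemma isR_plus (f g : R -> R) (a b If Ig : R) :
  is_RInt f a b If -> is_RInt g a b Ig -> is_RInt (fun x => f x + g x) a b (If + Ig).
Proof. intros H1 H2. exact (is_RInt_plus f g a b If Ig H1 H2). Qed.
Lemma isR_scal (f : R -> R) (a b k If : R) :
  is_RInt f a b If -> is_RInt (fun x => k * f x) a b (k * If).
Proof. intros H1. exact (is_RInt_scal f a b k If H1). Qed.
Lemma isR_minus (f g : R -> R) (a b If Ig : R) :
  is_RInt f a b If -> is_RInt g a b Ig -> is_RInt (fun x => f x - g x) a b (If - Ig).
Proof. intros H1 H2. exact (is_RInt_minus f g a b If Ig H1 H2). Qed.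
Lemma isR_ext (f g : R -> R) (a b v w : R) :
  (forall x, f x = g x) -> v = w -> is_RInt f a b v -> is_RInt g a b w.
Proof. intros H1 H2 H3. subst w. apply (is_RInt_ext f); auto. Qed.

Definition Kf (L mu : R) : R := if Req_EM_T mu 0 then L else sin (mu * L) / mu.

Lemma int_cos (L th mu : R) :
  is_RInt (fun u => cos (th + mu * u)) (-L) L (2 * cos th * Kf L mu).
Proof.
  unfold Kf. destruct (Req_EM_T mu 0) as [E|E].
  - subst mu. apply isR_ext with (fun _ => cos th) (scal (L - - L) (cos th)).
    + intros; f_equal; ring.
    + unfold scal; simpl; unfold mult; simpl; ring.
    + exact (is_RInt_const (V:=R_NormedModule) (-L) L (cos th)).
  - apply isR_ext with (fun u => cos (th + mu * u)) (minus ((fun u => sin (th + mu*u) / mu) L) ((fun u => sin (th + mu*u) / mu) (-L))).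
    + auto.
    + unfold minus, plus, opp; simpl.
      replace (th + mu * L) with (th + mu * L) by ring.
      replace (th + mu * - L) with (th - mu * L) by ring.
      rewrite sin_plus, sin_minus. field. auto.
    + apply (is_RInt_derive (fun u => sin (th + mu*u) / mu) (fun u => cos (th + mu * u))).
      * intros x _. auto_derive; auto. field. auto.
      * intros x _. apply (ex_derive_continuous (K:=R_AbsRing) (V:=R_NormedModule) (fun u => cos (th + mu * u))). auto_derive. auto.
Qed.

Lemma int_ucos (L w : R) : w <> 0 ->
  is_RInt (fun u => u * cos (w * u)) (-L) L 0.
Proof.
  intros Hw.
  apply isR_ext with (fun u => u * cos (w * u)) (minus ((fun u => u * sin (w*u) / w + cos (w*u) / (w*w)) L) ((fun u => u * sin (w*u) / w + cos (w*u) / (w*w)) (-L))).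
  + auto.
  + unfold minus, plus, opp; simpl.
    replace (w * - L) with (- (w * L)) by ring.
    rewrite sin_neg, cos_neg. field. auto.
  + apply (is_RInt_derive (fun u => u * sin (w*u) / w + cos (w*u) / (w*w)) (fun u => u * cos (w * u))).
    * intros x _. auto_derive; auto. field. auto.
    * intros x _. apply (ex_derive_continuous (K:=R_AbsRing) (V:=R_NormedModule) (fun u => u * cos (w * u))). auto_derive. auto.
Qed.
Definition phi (h u : R) : R := /2 * cos u + /4 * cos ((1+h) * u) + /4 * cos ((1-h) * u).
Definition Cf (L h lam : R) : R :=
  /2 * (Kf L (lam - 1) + Kf L (lam + 1)) + /4 * (Kf L (lam - (1+h)) + Kf L (lam + (1+h)))
  + /4 * (Kf L (lam - (1-h)) + Kf L (lam + (1-h))).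

Lemma cos_prod (w th lam u : R) :
  cos (w * u) * cos (th + lam * u) = /2 * (cos (th + (lam - w) * u) + cos (th + (lam + w) * u)).
Proof.
  replace (th + (lam - w) * u) with ((th + lam * u) - w * u) by ring.
  replace (th + (lam + w) * u) with ((th + lam * u) + w * u) by ring.
  rewrite (cos_minus (th + lam * u)), (cos_plus (th + lam * u)). field.
Qed.

Lemma int_wcos (L w th lam : R) :
  is_RInt (fun u => cos (w * u) * cos (th + lam * u)) (-L) L
    (cos th * (Kf L (lam - w) + Kf L (lam + w))).
Proof.
  apply isR_ext with (fun u => /2 * (cos (th + (lam - w) * u) + cos (th + (lam + w) * u)))
    (/2 * (2 * cos th * Kf L (lam - w) + 2 * cos th * Kf L (lam + w))).
  - intros; rewrite cos_prod; reflexivity.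
  - field.
  - apply isR_scal, isR_plus; apply int_cos.
Qed.

Lemma int_phi_cos (L h th lam : R) :
  is_RInt (fun u => phi h u * cos (th + lam * u)) (-L) L (cos th * Cf L h lam).
Proof.
  apply isR_ext with (fun u => /2 * (cos (1 * u) * cos (th + lam * u)) + /4 * (cos ((1+h) * u) * cos (th + lam * u))
     + /4 * (cos ((1-h) * u) * cos (th + lam * u)))
    (/2 * (cos th * (Kf L (lam - 1) + Kf L (lam + 1))) + /4 * (cos th * (Kf L (lam - (1+h)) + Kf L (lam + (1+h))))
     + /4 * (cos th * (Kf L (lam - (1-h)) + Kf L (lam + (1-h))))).
  - intros u; unfold phi; rewrite Rmult_1_l; ring.
  - unfold Cf; ring.
  - apply isR_plus; [apply isR_plus|]; apply isR_scal; apply int_wcos.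
Qed.

Lemma int_phi_aff (L h c0 c1 : R) : 0 < h < 1 ->
  sin L = 0 -> sin ((1+h) * L) = 0 -> sin ((1-h) * L) = 0 ->
  is_RInt (fun u => phi h u * (c0 + c1 * u)) (-L) L 0.
Proof.
  intros Hh H1 H2 H3.
  assert (E: forall w, w <> 0 -> sin (w * L) = 0 -> is_RInt (fun u => cos (w * u) * (c0 + c1 * u)) (-L) L 0).
  { intros w Hw Hs.
    apply isR_ext with (fun u => c0 * cos (0 + w * u) + c1 * (u * cos (w * u))) (c0 * (2 * cos 0 * Kf L w) + c1 * 0).
    - intros u. rewrite Rplus_0_l. ring.
    - unfold Kf. destruct (Req_EM_T w 0); [contradiction|]. rewrite Hs. field. auto.
    - apply isR_plus; apply isR_scal; [apply int_cos | apply int_ucos; auto]. }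
  apply isR_ext with (fun u => /2 * (cos (1 * u) * (c0 + c1 * u)) + /4 * (cos ((1+h) * u) * (c0 + c1 * u))
     + /4 * (cos ((1-h) * u) * (c0 + c1 * u))) (/2 * 0 + /4 * 0 + /4 * 0).
  - intros u; unfold phi; rewrite Rmult_1_l; ring.
  - ring.
  - apply isR_plus; [apply isR_plus|]; apply isR_scal; apply E; try lra.
    all: try (rewrite Rmult_1_l; auto); auto.
Qed.

Lemma sin_mPI (x : R) : sin (x - PI) = - sin x.
Proof. rewrite sin_minus, sin_PI, cos_PI. ring. Qed.

Section Kern.
Variable K : nat.
Hypothesis HK : (1 <= K)%nat.
Let L := 2 * INR K * PI.
Let h := / (2 * INR K).

Lemma INRK_pos : 1 <= INR K.
Proof. apply (le_INR 1). auto. Qed.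

Lemma hL : h * L = PI.
Proof. unfold h, L. pose proof INRK_pos. field. lra. Qed.

Lemma sinLp (x : R) : sin (x + L) = sin x.
Proof. unfold L. apply sin_period. Qed.
Lemma sinLm (x : R) : sin (x - L) = sin x.
Proof. rewrite <- (sinLp (x - L)). f_equal; ring. Qed.
Lemma sin1hp (x : R) : sin (x + (1+h) * L) = - sin x.
Proof. replace (x + (1+h)*L) with ((x + L) + PI) by (rewrite <- hL; ring). rewrite neg_sin, sinLp. auto. Qed.
Lemma sin1hm (x : R) : sin (x - (1+h) * L) = - sin x.
Proof. replace (x - (1+h)*L) with ((x - L) - PI) by (rewrite <- hL; ring). rewrite sin_mPI, sinLm. auto. Qed.
Lemma sin1mp (x : R) : sin (x + (1-h) * L) = - sin x.
Proof. replace (x + (1-h)*L) with ((x + L) - PI) by (rewrite <- hL; ring). rewrite sin_mPI, sinLp. auto. Qed.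
Lemma sin1mm (x : R) : sin (x - (1-h) * L) = - sin x.
Proof. replace (x - (1-h)*L) with ((x - L) + PI) by (rewrite <- hL; ring). rewrite neg_sin, sinLm. auto. Qed.

Lemma h_pos : 0 < h.
Proof. unfold h. pose proof INRK_pos. apply Rinv_0_lt_compat. lra. Qed.
Lemma h_le : h <= /2.
Proof. unfold h. pose proof INRK_pos. apply Rinv_le_contravar; lra. Qed.
Lemma L_pos : 0 < L.
Proof. unfold L. pose proof INRK_pos. pose proof PI_RGT_0. nra. Qed.

Lemma C1 : Cf L h 1 = L / 2.
Proof.
  pose proof h_pos. pose proof h_le.
  unfold Cf, Kf.
  destruct (Req_EM_T (1 - 1) 0); [|lra].
  destruct (Req_EM_T (1 + 1) 0); [lra|].
  destruct (Req_EM_T (1 - (1+h)) 0); [lra|].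
  destruct (Req_EM_T (1 + (1+h)) 0); [lra|].
  destruct (Req_EM_T (1 - (1-h)) 0); [lra|].
  destruct (Req_EM_T (1 + (1-h)) 0); [lra|].
  replace ((1+1)*L) with (0 + L + L) by ring.
  replace ((1 - (1+h))*L) with (0 - h * L) by ring.
  replace ((1 + (1+h))*L) with ((0 + L) + (1+h) * L) by ring.
  replace ((1 - (1-h))*L) with (0 + h * L) by ring.
  replace ((1 + (1-h))*L) with ((0 + L) + (1-h) * L) by ring.
  rewrite hL, sin1hp, sin1mp, !sinLp, sin_mPI, neg_sin, sin_0.
  field. split; lra.
Qed.

Lemma Cgen (lam : R) : 0 < lam -> lam <> 1 -> lam <> 1 + h -> lam <> 1 - h ->
  Cf L h lam = - sin (lam * L) * (lam * (h * h) * (lam * lam + 3 - h * h))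
     / ((lam * lam - 1) * (lam * lam - (1+h)*(1+h)) * (lam * lam - (1-h)*(1-h))).
Proof.
  intros H0 H1 H2 H3. pose proof h_pos. pose proof h_le.
  unfold Cf, Kf.
  destruct (Req_EM_T (lam - 1) 0); [lra|].
  destruct (Req_EM_T (lam + 1) 0); [lra|].
  destruct (Req_EM_T (lam - (1+h)) 0); [lra|].
  destruct (Req_EM_T (lam + (1+h)) 0); [lra|].
  destruct (Req_EM_T (lam - (1-h)) 0); [lra|].
  destruct (Req_EM_T (lam + (1-h)) 0); [lra|].
  replace ((lam - 1)*L) with (lam * L - L) by ring.
  replace ((lam + 1)*L) with (lam * L + L) by ring.
  replace ((lam - (1+h))*L) with (lam * L - (1+h) * L) by ring.
  replace ((lam + (1+h))*L) with (lam * L + (1+h) * L) by ring.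
  replace ((lam - (1-h))*L) with (lam * L - (1-h) * L) by ring.
  replace ((lam + (1-h))*L) with (lam * L + (1-h) * L) by ring.
  rewrite sin1hp, sin1hm, sin1mp, sin1mm, sinLp, sinLm.
  assert (lam * lam - 1 <> 0).
  { intro E. assert ((lam - 1) * (lam + 1) = 0) by (rewrite <- E; ring).
    apply Rmult_integral in H5; destruct H5; lra. }
  assert (lam * lam - (1+h)*(1+h) <> 0).
  { intro E. assert ((lam - (1+h)) * (lam + (1+h)) = 0) by (rewrite <- E; ring).
    apply Rmult_integral in H6; destruct H6; lra. }
  assert (lam * lam - (1-h)*(1-h) <> 0).
  { intro E. assert ((lam - (1-h)) * (lam + (1-h)) = 0) by (rewrite <- E; ring).
    apply Rmult_integral in H7; destruct H7; lra. }
  field. repeat split; lra.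
Qed.

End Kern.

Lemma div_le (X X' Y Y' : R) : 0 <= X <= X' -> 0 < Y' <= Y -> X / Y <= X' / Y'.
Proof.
  intros [H1 H2] [H3 H4]. unfold Rdiv.
  apply Rmult_le_compat; try lra.
  - left; apply Rinv_0_lt_compat; lra.
  - apply Rinv_le_contravar; lra.
Qed.

Lemma R2_arith (b h lam s L : R) : 1 < b -> 0 < h <= /2 -> 0 < L ->
  (1 + / (b*b)) / 2 <= (1-h)*(1-h) -> 0 < lam <= / b -> Rabs s <= lam * L ->
  Rabs (- s * (lam * (h * h) * (lam * lam + 3 - h * h))
     / ((lam * lam - 1) * (lam * lam - (1+h)*(1+h)) * (lam * lam - (1-h)*(1-h))))
  <= 8 * L * (h * h) / ((1 - /(b*b)) * (1 - /(b*b)) * (1 - /(b*b))) * (lam * lam).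
Proof.
  intros Hb Hh HL Hh2 Hlam Hs.
  set (q := / (b*b)) in *.
  assert (Hq0 : 0 < q) by (unfold q; apply Rinv_0_lt_compat; nra).
  assert (Hq1 : q < 1) by (unfold q; rewrite <- Rinv_1; apply Rinv_lt_contravar; nra).
  assert (Hl2 : lam * lam <= q).
  { unfold q. rewrite Rinv_mult. apply Rmult_le_compat; lra. }
  set (A := 1 - lam*lam). set (B := (1+h)*(1+h) - lam*lam). set (D := (1-h)*(1-h) - lam*lam).
  set (X := lam * (h * h) * (lam * lam + 3 - h * h)).
  assert (HA : 1 - q <= A) by (unfold A; lra).
  assert (HB : A <= B) by (unfold A, B; nra).
  assert (HD : (1-q)/2 <= D) by (unfold D; lra).
  assert (HX : 0 <= X <= lam * (h*h) * 4).
  { unfold X. split. apply Rmult_le_pos. apply Rmult_le_pos; nra. nra.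
    apply Rmult_le_compat_l. nra. nra. }
  assert (E : - s * X / ((lam * lam - 1) * (lam * lam - (1+h)*(1+h)) * (lam * lam - (1-h)*(1-h)))
             = s * (X / (A * B * D))).
  { unfold A, B, D. field. repeat split; nra. }
  rewrite E, Rabs_mult, (Rabs_pos_eq (X / _)).
  2: { apply Rmult_le_pos; [lra|]. left; apply Rinv_0_lt_compat. apply Rmult_lt_0_compat; [|lra]. apply Rmult_lt_0_compat; lra. }
  apply Rle_trans with (lam * L * (lam * (h*h) * 4 / ((1-q) * (1-q) * ((1-q)/2)))).
  - apply Rmult_le_compat; [apply Rabs_pos| |exact Hs|].
    + apply Rmult_le_pos; [lra|]. left; apply Rinv_0_lt_compat. apply Rmult_lt_0_compat; [|lra]. apply Rmult_lt_0_compat; lra.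
    + apply div_le. lra. split.
      * apply Rmult_lt_0_compat; [|lra]. apply Rmult_lt_0_compat; lra.
      * apply Rmult_le_compat; try lra. apply Rmult_le_pos; lra. apply Rmult_le_compat; lra.
  - right. field. lra.
Qed.

Lemma R1_arith (b h lam s : R) : 1 < b -> 0 < h <= /2 ->
  (1+h)*(1+h) <= (1 + b*b) / 2 -> b <= lam -> Rabs s <= 1 ->
  Rabs (- s * (lam * (h * h) * (lam * lam + 3 - h * h))
     / ((lam * lam - 1) * (lam * lam - (1+h)*(1+h)) * (lam * lam - (1-h)*(1-h))))
  <= 8 * (h * h) / ((1 - /(b*b)) * (1 - /(b*b)) * (1 - /(b*b))) / lam.
Proof.
  intros Hb Hh Hh2 Hlam Hs.
  set (q := / (b*b)) in *.
  assert (Hq0 : 0 < q) by (unfold q; apply Rinv_0_lt_compat; nra).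
  assert (Hq1 : q < 1) by (unfold q; rewrite <- Rinv_1; apply Rinv_lt_contravar; nra).
  assert (Hqb : q * (b * b) = 1) by (unfold q; field; lra).
  set (m := lam * lam).
  assert (Hm : b * b <= m) by (unfold m; nra).
  assert (Hqm : 1 <= q * m) by nra.
  set (A := m - 1). set (B := m - (1+h)*(1+h)). set (D := m - (1-h)*(1-h)).
  set (X := lam * (h * h) * (m + 3 - h * h)).
  assert (HA : (1 - q) * m <= A) by (unfold A; nra).
  assert (HB : (1 - q) * m / 2 <= B) by (unfold B; nra).
  assert (HD : A <= D) by (unfold A, D; nra).
  assert (HX : 0 <= X <= lam * (h*h) * (4 * m)).
  { unfold X. split. apply Rmult_le_pos. apply Rmult_le_pos; nra. nra.
    apply Rmult_le_compat_l. nra. nra. }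
  assert (E : - s * X / (A * B * D) = - s * (X / (A * B * D))) by (unfold Rdiv; ring).
  assert (Hm1 : 1 < m) by nra.
  rewrite E, Rabs_mult, Rabs_Ropp, (Rabs_pos_eq (X / _)).
  2: { apply Rmult_le_pos; [lra|]. left; apply Rinv_0_lt_compat. apply Rmult_lt_0_compat; [|nra]. apply Rmult_lt_0_compat; nra. }
  apply Rle_trans with (1 * (lam * (h*h) * (4 * m) / (((1-q)*m) * ((1-q)*m/2) * ((1-q)*m)))).
  - apply Rmult_le_compat; [apply Rabs_pos| |exact Hs|].
    + apply Rmult_le_pos; [lra|]. left; apply Rinv_0_lt_compat. apply Rmult_lt_0_compat; [|nra]. apply Rmult_lt_0_compat; nra.
    + apply div_le. lra. split.
      * apply Rmult_lt_0_compat; [|nra]. apply Rmult_lt_0_compat; nra.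
      * apply Rmult_le_compat; try nra. apply Rmult_le_pos; nra. apply Rmult_le_compat; nra.
  - assert (Hl : 1 <= lam) by lra.
    apply Rle_trans with (8 * (h*h) / ((1-q)*(1-q)*(1-q)) / (lam * m)).
    + right. unfold m. field. repeat split; lra.
    + apply div_le. split. apply Rmult_le_pos. apply Rmult_le_pos; nra. left; apply Rinv_0_lt_compat.
      apply Rmult_lt_0_compat; [|lra]. apply Rmult_lt_0_compat; lra. lra.
      split. lra. unfold m; nra.
Qed.

Section Series.
Variables a b c : R.
Hypothesis ha : 1 < a.

Definition tm (t : R) (j : nat) : R := / a ^ j * cos (b ^ j * t + c).
Definition tau (J : nat) : R := (/ a) ^ J / (a - 1).

Lemma ra_pos : 0 < / a.
Proof. apply Rinv_0_lt_compat; lra. Qed.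
Lemma ra_lt1 : / a < 1.
Proof. rewrite <- Rinv_1. apply Rinv_lt_contravar; lra. Qed.

Lemma tm_bound t j : Rabs (tm t j) <= (/ a) ^ j.
Proof.
  unfold tm. rewrite Rabs_mult, pow_inv.
  rewrite (Rabs_pos_eq (/ a ^ j)).
  2: { left; apply Rinv_0_lt_compat, pow_lt; lra. }
  pose proof (COS_bound (b ^ j * t + c)).
  assert (0 < / a ^ j) by (apply Rinv_0_lt_compat, pow_lt; lra).
  assert (Rabs (cos (b ^ j * t + c)) <= 1) by (apply Rabs_le; lra).
  nra.
Qed.

Lemma psum_diff t J n :
  Rabs (sum_f_R0 (tm t) (J + n) - sum_f_R0 (tm t) J) <= tau J.
Proof.
  pose proof ra_pos; pose proof ra_lt1.
  assert (G : forall n, Rabs (sum_f_R0 (tm t) (J + n) - sum_f_R0 (tm t) J)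
             <= (/a) ^ (S J) * (1 - (/a) ^ n) / (1 - /a)).
  { induction n0 as [|n0 IH].
    - rewrite Nat.add_0_r. unfold Rminus at 1. rewrite Rplus_opp_r, Rabs_R0. simpl.
      unfold Rdiv. rewrite Rminus_diag, Rmult_0_r, Rmult_0_l. lra.
    - replace (J + S n0)%nat with (S (J + n0)) by lia. simpl sum_f_R0.
      replace (sum_f_R0 (tm t) (J + n0) + tm t (S (J + n0)) - sum_f_R0 (tm t) J)
        with ((sum_f_R0 (tm t) (J + n0) - sum_f_R0 (tm t) J) + tm t (S (J + n0))) by ring.
      eapply Rle_trans. apply Rabs_triang.
      pose proof (tm_bound t (S (J + n0))).
      replace ((/ a) ^ S (J + n0)) with ((/a) ^ S J * (/a) ^ n0) in H1
        by (rewrite <- pow_add; f_equal; lia).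
      replace ((/ a) ^ S J * (1 - (/ a) ^ S n0) / (1 - / a))
        with ((/ a) ^ S J * (1 - (/ a) ^ n0) / (1 - / a) + (/a) ^ S J * (/a) ^ n0)
        by (simpl; field; lra).
      lra. }
  eapply Rle_trans. apply G.
  unfold tau. assert (0 < (/a) ^ n) by (apply pow_lt; lra).
  assert (0 < (/a) ^ J) by (apply pow_lt; lra).
  assert ((/a) ^ n <= 1) by (rewrite <- (pow1 n); apply pow_incr; lra).
  replace ((/ a) ^ J / (a - 1)) with ((/a) ^ S J * 1 / (1 - /a)) by (simpl; field; lra).
  apply div_le. split. apply Rmult_le_pos. left; apply pow_lt; lra. lra.
  apply Rmult_le_compat_l. left; apply pow_lt; lra. lra. lra.
Qed.

Lemma tau_pos J : 0 < tau J.
Proof. unfold tau. pose proof ra_pos. apply Rdiv_lt_0_compat. apply pow_lt; lra. lra. Qed.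

Lemma tau_small eps : 0 < eps -> exists N, forall n, (n >= N)%nat -> tau n < eps.
Proof.
  intros He. pose proof ra_pos; pose proof ra_lt1.
  destruct (pow_lt_1_zero (/a) ltac:(rewrite Rabs_pos_eq; lra) (eps * (a - 1)) ltac:(nra)) as [N HN].
  exists N. intros n Hn. specialize (HN n Hn). rewrite Rabs_pos_eq in HN by (left; apply pow_lt; lra).
  unfold tau. apply Rmult_lt_reg_r with (a - 1). lra. unfold Rdiv. rewrite Rmult_assoc, Rinv_l by lra. lra.
Qed.

Lemma tail_bound t l J : infinite_sum (tm t) l -> Rabs (l - sum_f_R0 (tm t) J) <= tau J.
Proof.
  intros Hl. apply Rnot_lt_le. intro Hc.
  destruct (Hl (Rabs (l - sum_f_R0 (tm t) J) - tau J)) as [N HN]. lra.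
  specialize (HN (J + N)%nat ltac:(lia)). unfold Rdist in HN.
  pose proof (psum_diff t J N).
  assert (Rabs (l - sum_f_R0 (tm t) J) <= Rabs (sum_f_R0 (tm t) (J + N) - l) + Rabs (sum_f_R0 (tm t) (J + N) - sum_f_R0 (tm t) J)).
  { replace (l - sum_f_R0 (tm t) J) with (- (sum_f_R0 (tm t) (J + N) - l) + (sum_f_R0 (tm t) (J + N) - sum_f_R0 (tm t) J)) by ring.
    eapply Rle_trans. apply Rabs_triang. rewrite Rabs_Ropp. lra. }
  lra.
Qed.

Lemma sum_exists t : exists l, infinite_sum (tm t) l.
Proof.
  assert (Hc : Cauchy_crit (sum_f_R0 (tm t))).
  { intros eps He. destruct (tau_small eps He) as [N HN]. exists N. intros n m Hn Hm.
    unfold Rdist.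
    destruct (Nat.le_ge_cases n m) as [H|H].
    - replace m with (n + (m - n))%nat by lia. rewrite <- Rabs_Ropp.
      replace (- (sum_f_R0 (tm t) n - sum_f_R0 (tm t) (n + (m - n)))) with (sum_f_R0 (tm t) (n + (m - n)) - sum_f_R0 (tm t) n) by ring.
      eapply Rle_lt_trans. apply psum_diff. apply HN; lia.
    - replace n with (m + (n - m))%nat by lia.
      eapply Rle_lt_trans. apply psum_diff. apply HN; lia. }
  destruct (Rcomplete.R_complete _ Hc) as [l Hl]. exists l. exact Hl.
Qed.

Lemma sum_bounded (f : R -> R) : (forall t, infinite_sum (tm t) (f t)) ->
  forall t, Rabs (f t) <= 1 + tau 0.
Proof.
  intros Hf t. pose proof (tail_bound t (f t) 0 (Hf t)).
  pose proof (tm_bound t 0). simpl sum_f_R0 in *.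
  replace (f t) with ((f t - tm t 0) + tm t 0) by ring.
  eapply Rle_trans. apply Rabs_triang. simpl in H0. lra.
Qed.

Lemma psum_cont (n : nat) (x : R) : continuity_pt (fun t => sum_f_R0 (tm t) n) x.
Proof.
  apply continuity_pt_filterlim.
  apply (ex_derive_continuous (K:=R_AbsRing) (V:=R_NormedModule)).
  induction n as [|n IH].
  - simpl. unfold tm. auto_derive. auto.
  - simpl. apply (ex_derive_plus (fun t => sum_f_R0 (tm t) n) (fun t => tm t (S n))). exact IH.
    unfold tm. auto_derive. auto.
Qed.

Lemma sum_cont (f : R -> R) : (forall t, infinite_sum (tm t) (f t)) -> continuity f.
Proof.
  intros Hf x.
  apply (CVU_continuity (fun n t => sum_f_R0 (tm t) n) f x (mkposreal 1 Rlt_0_1)).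
  - intros eps He. destruct (tau_small eps He) as [N HN]. exists N. intros n y Hn _.
    eapply Rle_lt_trans. apply tail_bound. apply Hf. apply HN. lia.
  - intros; apply psum_cont.
  - unfold Boule. simpl. rewrite Rminus_diag, Rabs_R0. lra.
Qed.

End Series.

Lemma sum_est (g : nat -> R) (A Q rho V : R) (k : nat) :
  0 < rho < 1 -> 0 <= Q ->
  (forall j, (j < k)%nat -> Rabs (A * g j) <= Q * rho ^ (k - j)) ->
  (forall j, (k < j)%nat -> Rabs (A * g j) <= Q * rho ^ (j - k)) ->
  A * g k = V ->
  forall J, (k <= J)%nat -> Rabs (A * sum_f_R0 g J - V) <= 2 * Q * rho / (1 - rho).
Proof.
  intros Hr HQ Hlt Hgt Hk.
  assert (P : forall J, ((J < k)%nat -> Rabs (A * sum_f_R0 g J) <= Q * rho ^ (k - J) / (1 - rho)) /\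
                        ((k <= J)%nat -> Rabs (A * sum_f_R0 g J - V) <= Q * (2 * rho - rho ^ (J - k + 1)) / (1 - rho))).
  { induction J as [|J [IH1 IH2]].
    - split; intros H; simpl sum_f_R0.
      + eapply Rle_trans. apply Hlt. auto. rewrite Nat.sub_0_r.
        assert (0 <= rho ^ k) by (left; apply pow_lt; lra).
        unfold Rdiv. rewrite <- (Rmult_1_r (Q * rho ^ k)) at 1.
        apply Rmult_le_compat_l. nra. rewrite <- Rinv_1. apply Rinv_le_contravar; lra.
      + assert (k = 0%nat) by lia. subst k. rewrite Hk, Rminus_diag, Rabs_R0. simpl.
        apply Rmult_le_pos. nra. left; apply Rinv_0_lt_compat; lra.
    - simpl sum_f_R0. split; intros H.
      + rewrite Rmult_plus_distr_l. eapply Rle_trans. apply Rabs_triang.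
        pose proof (IH1 ltac:(lia)). pose proof (Hlt (S J) H).
        replace (k - J)%nat with (S (k - S J)) in H0 by lia. simpl pow in H0.
        assert (0 <= rho ^ (k - S J)) by (left; apply pow_lt; lra).
        replace (Q * rho ^ (k - S J) / (1 - rho)) with (Q * (rho * rho ^ (k - S J)) / (1 - rho) + Q * rho ^ (k - S J))
          by (field; lra). lra.
      + destruct (Nat.eq_dec (S J) k) as [E|E].
        * pose proof (IH1 ltac:(lia)). rewrite <- E in Hk.
          replace (A * (sum_f_R0 g J + g (S J)) - V) with (A * sum_f_R0 g J) by (rewrite <- Hk; ring).
          replace (k - J)%nat with 1%nat in H0 by lia. replace (S J - k + 1)%nat with 1%nat by lia.
          eapply Rle_trans. apply H0. right. simpl. field. lra.
        * pose proof (IH2 ltac:(lia)). pose proof (Hgt (S J) ltac:(lia)).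
          replace (A * (sum_f_R0 g J + g (S J)) - V) with ((A * sum_f_R0 g J - V) + A * g (S J)) by ring.
          eapply Rle_trans. apply Rabs_triang.
          replace (S J - k)%nat with (J - k + 1)%nat in H1 by lia.
          replace (S J - k + 1)%nat with (S (J - k + 1)) by lia. simpl pow.
          replace (Q * (2 * rho - rho * rho ^ (J - k + 1)) / (1 - rho))
            with (Q * (2 * rho - rho ^ (J - k + 1)) / (1 - rho) + Q * rho ^ (J - k + 1)) by (field; lra).
          lra. }
  intros J HJ. destruct (P J) as [_ P2]. eapply Rle_trans. apply P2; auto.
  assert (0 <= rho ^ (J - k + 1)) by (left; apply pow_lt; lra).
  unfold Rdiv. apply Rmult_le_compat_r. left; apply Rinv_0_lt_compat; lra. nra.
Qed.

Lemma nat_unbounded (x : R) : exists K : nat, x < INR K.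
Proof.
  destruct (archimed x) as [H1 _].
  destruct (Z_lt_le_dec 0%Z (up x)) as [Hp|Hn].
  - exists (Z.to_nat (up x)). rewrite INR_IZR_INZ, Z2Nat.id by lia. lra.
  - exists 0%nat. simpl. apply IZR_le in Hn. lra.
Qed.

Lemma abs_sin_le (x : R) : 0 < x -> Rabs (sin x) <= x.
Proof.
  intros Hx. apply Rabs_le. pose proof (sin_lt_x x Hx). pose proof (SIN_bound x).
  destruct (Rle_lt_dec 1 x). lra. pose proof PI2_3_2.
  pose proof (sin_ge_0 x ltac:(lra) ltac:(lra)). lra.
Qed.

Lemma phi_bound h u : Rabs (phi h u) <= 1.
Proof.
  unfold phi. pose proof (COS_bound u). pose proof (COS_bound ((1+h)*u)). pose proof (COS_bound ((1-h)*u)).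
  apply Rabs_le. lra.
Qed.

Section Main.
Variables a b c : R.
Hypothesis ha : 1 < a.
Hypothesis hab : a <= b.
Variable K : nat.
Hypothesis HK : (2 <= K)%nat.
Let L := 2 * INR K * PI.
Let h := / (2 * INR K).
Let c0 := 1 - / (b * b).
Let Q := 8 * (L + 1) * (h * h) / (c0 * c0 * c0).
Hypothesis Hh1 : (1+h)*(1+h) <= (1 + b*b) / 2.
Hypothesis Hh2 : (1 + / (b*b)) / 2 <= (1-h)*(1-h).
Hypothesis HQ : 2 * Q * / b / (1 - / b) <= 1.

Variable f : R -> R.
Hypothesis Hf : forall t, infinite_sum (tm a b c t) (f t).
Variables t0 l : R.
Hypothesis Hd : derivable_pt_lim f t0 l.

Lemma HK1 : (1 <= K)%nat. Proof. lia. Qed.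
Lemma hb : 1 < b. Proof. lra. Qed.
Lemma Lbig : 12 < L.
Proof. unfold L. assert (2 <= INR K) by (apply (le_INR 2); auto). pose proof PI2_3_2. nra. Qed.
Lemma hpos : 0 < h /\ h <= /2. Proof. split; [apply (h_pos K HK1) | apply (h_le K HK1)]. Qed.
Lemma c0pos : 0 < c0.
Proof. unfold c0. assert (/(b*b) < 1). rewrite <- Rinv_1. apply Rinv_lt_contravar; pose proof hb; nra. lra. Qed.
Lemma Qpos : 0 <= Q.
Proof. unfold Q. pose proof c0pos. pose proof Lbig. apply Rmult_le_pos. apply Rmult_le_pos; [lra|]. pose proof hpos; nra.
  left; apply Rinv_0_lt_compat. apply Rmult_lt_0_compat; [|lra]. apply Rmult_lt_0_compat; lra. Qed.

Lemma h1lt : 1 + h < b.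
Proof. pose proof hpos; pose proof hb. nra. Qed.
Lemma h2gt : / b < 1 - h.
Proof.
  pose proof hpos; pose proof hb.
  assert (/b * /b < (1-h)*(1-h)).
  { assert (/ (b*b) < 1) by (rewrite <- Rinv_1; apply Rinv_lt_contravar; nra).
    rewrite <- Rinv_mult. lra. }
  assert (0 < /b) by (apply Rinv_0_lt_compat; lra). nra.
Qed.

Lemma Cbound_small (lam : R) : 0 < lam <= / b -> Rabs (Cf L h lam) <= Q * (lam * lam).
Proof.
  intros Hl. pose proof h2gt. pose proof hpos. pose proof Lbig.
  assert (E : Cf L h lam = - sin (lam * L) * (lam * (h * h) * (lam * lam + 3 - h * h))
     / ((lam * lam - 1) * (lam * lam - (1+h)*(1+h)) * (lam * lam - (1-h)*(1-h))))
    by (apply (Cgen K HK1); fold h; lra).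
  rewrite E.
  eapply Rle_trans. apply (R2_arith b h lam (sin (lam * L)) L); try apply hb; try lra. apply abs_sin_le. nra.
  unfold Q. fold c0. apply Rmult_le_compat_r. nra. apply div_le. split. pose proof hpos; nra. nra.
  split. pose proof c0pos. apply Rmult_lt_0_compat; [|lra]. apply Rmult_lt_0_compat; lra. lra.
Qed.

Lemma Cbound_big (lam : R) : b <= lam -> Rabs (Cf L h lam) <= Q / lam.
Proof.
  intros Hl. pose proof h1lt. pose proof hpos. pose proof Lbig. pose proof hb.
  assert (E : Cf L h lam = - sin (lam * L) * (lam * (h * h) * (lam * lam + 3 - h * h))
     / ((lam * lam - 1) * (lam * lam - (1+h)*(1+h)) * (lam * lam - (1-h)*(1-h))))
    by (apply (Cgen K HK1); fold h; lra).
  rewrite E.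
  eapply Rle_trans. apply (R1_arith b h lam (sin (lam * L))); try apply hb; try lra. apply Rabs_le. apply SIN_bound.
  unfold Q. fold c0. apply div_le. split.
  apply Rmult_le_pos. nra. left; apply Rinv_0_lt_compat. pose proof c0pos. apply Rmult_lt_0_compat; [|lra]. apply Rmult_lt_0_compat; lra.
  apply div_le. split. nra. nra. pose proof c0pos. split. apply Rmult_lt_0_compat; [|lra]. apply Rmult_lt_0_compat; lra. lra.
  lra.
Qed.


Definition gk (k : nat) (al : R) (j : nat) : R :=
  / a ^ j * (cos (b ^ j * t0 + c + b ^ j / b ^ k * al) * Cf L h (b ^ j / b ^ k)).

Lemma bk_pos k : 0 < b ^ k. Proof. apply pow_lt; pose proof hb; lra. Qed.

Lemma term_int k al j : is_RInt (fun u => phi h u * tm a b c (t0 + (u + al) / b ^ k) j) (-L) L (gk k al j).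
Proof.
  unfold gk. pose proof (bk_pos k).
  apply isR_ext with (fun u => / a ^ j * (phi h u * cos ((b ^ j * t0 + c + b ^ j / b ^ k * al) + b ^ j / b ^ k * u)))
    (/ a ^ j * (cos (b ^ j * t0 + c + b ^ j / b ^ k * al) * Cf L h (b ^ j / b ^ k))).
  - intros u. unfold tm.
    replace (b ^ j * (t0 + (u + al) / b ^ k) + c) with ((b ^ j * t0 + c + b ^ j / b ^ k * al) + b ^ j / b ^ k * u)
      by (field; lra). ring.
  - reflexivity.
  - apply isR_scal, int_phi_cos.
Qed.

Lemma psum_int k al J : is_RInt (fun u => phi h u * sum_f_R0 (tm a b c (t0 + (u + al) / b ^ k)) J) (-L) L
  (sum_f_R0 (gk k al) J).
Proof.
  induction J as [|J IH].
  - simpl. apply term_int.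
  - simpl. apply isR_ext with (fun u => phi h u * sum_f_R0 (tm a b c (t0 + (u + al) / b ^ k)) J
        + phi h u * tm a b c (t0 + (u + al) / b ^ k) (S J)) (sum_f_R0 (gk k al) J + gk k al (S J)).
    + intros; ring.
    + reflexivity.
    + apply isR_plus. exact IH. apply term_int.
Qed.

Lemma sinL0 : sin L = 0.
Proof. pose proof (sinLp K 0). rewrite Rplus_0_l, sin_0 in H. exact H. Qed.
Lemma sinL1 : sin ((1 + h) * L) = 0.
Proof. pose proof (sin1hp K HK1 0). rewrite Rplus_0_l, sin_0, Ropp_0 in H. exact H. Qed.
Lemma sinL2 : sin ((1 - h) * L) = 0.
Proof. pose proof (sin1mp K HK1 0). rewrite Rplus_0_l, sin_0, Ropp_0 in H. exact H. Qed.

Lemma aff_int k al : is_RInt (fun u => phi h u * (f t0 + l * ((u + al) / b ^ k))) (-L) L 0.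
Proof.
  pose proof (bk_pos k). pose proof hpos.
  apply isR_ext with (fun u => phi h u * ((f t0 + l * al / b ^ k) + (l / b ^ k) * u)) 0.
  - intros u. f_equal. field. lra.
  - reflexivity.
  - apply int_phi_aff. lra. apply sinL0. apply sinL1. apply sinL2.
Qed.


Lemma est_sum k al J : (k <= J)%nat ->
  Rabs (a ^ k * sum_f_R0 (gk k al) J - cos (b ^ k * t0 + c + al) * (L / 2)) <= 1.
Proof.
  intros HJ. pose proof hb. pose proof Qpos.
  assert (Hr : 0 < / b < 1).
  { split. apply Rinv_0_lt_compat; lra. rewrite <- Rinv_1. apply Rinv_lt_contravar; lra. }
  eapply Rle_trans. apply (sum_est (gk k al) (a ^ k) Q (/ b) (cos (b ^ k * t0 + c + al) * (L / 2)) k); auto.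
  - intros j Hj. unfold gk.
    set (d := (k - j)%nat). assert (Ek : k = (j + d)%nat) by (unfold d; lia).
    assert (Hd1 : (1 <= d)%nat) by (unfold d; lia).
    assert (Hlam : b ^ j / b ^ k = (/ b) ^ d).
    { rewrite Ek, pow_add, pow_inv. field. split; apply pow_nonzero; lra. }
    assert (Hak : a ^ k * / a ^ j = a ^ d).
    { rewrite Ek, pow_add. field. apply pow_nonzero; lra. }
    rewrite Hlam.
    assert (Hmu : 0 < (/ b) ^ d <= / b).
    { split. apply pow_lt; lra. replace d with (S (d - 1)) by lia. simpl.
      assert ((/b) ^ (d - 1) <= 1) by (rewrite <- (pow1 (d - 1)); apply pow_incr; lra). nra. }
    pose proof (Cbound_small ((/ b) ^ d) Hmu) as HC.
    replace (a ^ k * (/ a ^ j * (cos (b ^ j * t0 + c + (/ b) ^ d * al) * Cf L h ((/ b) ^ d))))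
      with (a ^ d * cos (b ^ j * t0 + c + (/ b) ^ d * al) * Cf L h ((/ b) ^ d)) by (rewrite <- Hak; ring).
    rewrite !Rabs_mult, (Rabs_pos_eq (a ^ d)) by (left; apply pow_lt; lra).
    assert (Hcos : Rabs (cos (b ^ j * t0 + c + (/ b) ^ d * al)) <= 1) by (apply Rabs_le; apply COS_bound).
    assert (Had : a ^ d <= b ^ d) by (apply pow_incr; lra).
    assert (Hbd : b ^ d * (/ b) ^ d = 1) by (rewrite pow_inv; field; apply pow_nonzero; lra).
    assert (0 < a ^ d) by (apply pow_lt; lra).
    apply Rle_trans with (b ^ d * 1 * (Q * ((/ b) ^ d * (/ b) ^ d))).
    + apply Rmult_le_compat. apply Rmult_le_pos; [lra|apply Rabs_pos]. apply Rabs_pos. apply Rmult_le_compat; try lra. apply Rabs_pos. exact HC.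
    + right. replace (b ^ d * 1 * (Q * ((/ b) ^ d * (/ b) ^ d))) with (Q * (/b) ^ d * (b ^ d * (/ b) ^ d)) by ring.
      rewrite Hbd. ring.
  - intros j Hj. unfold gk.
    set (d := (j - k)%nat). assert (Ej : j = (k + d)%nat) by (unfold d; lia).
    assert (Hd1 : (1 <= d)%nat) by (unfold d; lia).
    assert (Hlam : b ^ j / b ^ k = b ^ d).
    { rewrite Ej, pow_add. field. apply pow_nonzero; lra. }
    assert (Hak : a ^ k * / a ^ j = / a ^ d).
    { rewrite Ej, pow_add. field. split; apply pow_nonzero; lra. }
    rewrite Hlam.
    assert (Hbd : b <= b ^ d).
    { replace d with (S (d - 1)) by lia. simpl.
      assert (1 <= b ^ (d - 1)) by (rewrite <- (pow1 (d - 1)); apply pow_incr; lra). nra. }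
    pose proof (Cbound_big (b ^ d) Hbd) as HC.
    replace (a ^ k * (/ a ^ j * (cos (b ^ j * t0 + c + b ^ d * al) * Cf L h (b ^ d))))
      with (/ a ^ d * cos (b ^ j * t0 + c + b ^ d * al) * Cf L h (b ^ d)) by (rewrite <- Hak; ring).
    assert (0 < a ^ d) by (apply pow_lt; lra).
    assert (1 <= a ^ d) by (rewrite <- (pow1 d); apply pow_incr; lra).
    assert (/ a ^ d <= 1) by (rewrite <- Rinv_1; apply Rinv_le_contravar; lra).
    assert (0 < / a ^ d) by (apply Rinv_0_lt_compat; lra).
    rewrite !Rabs_mult, (Rabs_pos_eq (/ a ^ d)) by lra.
    assert (Hcos : Rabs (cos (b ^ j * t0 + c + b ^ d * al)) <= 1) by (apply Rabs_le; apply COS_bound).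
    apply Rle_trans with (1 * 1 * (Q / b ^ d)).
    + apply Rmult_le_compat. apply Rmult_le_pos; [lra|apply Rabs_pos]. apply Rabs_pos. apply Rmult_le_compat; try lra. apply Rabs_pos. exact HC.
    + rewrite pow_inv. right. field. apply pow_nonzero; lra.
  - unfold gk. assert (Hk1 : b ^ k / b ^ k = 1) by (field; apply pow_nonzero; lra).
    assert (E1 : Cf L h 1 = L / 2) by (apply (C1 K HK1)). rewrite Hk1, E1, Rmult_1_l.
    field. apply pow_nonzero; lra.
  - exact HQ.
Qed.

Lemma main_est al : 0 <= al <= 2 -> exists k0, forall k, (k >= k0)%nat ->
  Rabs (cos (b ^ k * t0 + c + al)) * (L / 2) <= 3 / 2.
Proof.
  intros Hal. pose proof Lbig. pose proof hb.
  set (eps := / (8 * L * (L + 2))).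
  assert (Heps : 0 < eps) by (unfold eps; apply Rinv_0_lt_compat; nra).
  destruct (Hd eps Heps) as [del Hdel].
  assert (Hdp : 0 < del) by apply cond_pos.
  assert (Hrb : Rabs (/ b) < 1).
  { rewrite Rabs_pos_eq by (left; apply Rinv_0_lt_compat; lra). rewrite <- Rinv_1. apply Rinv_lt_contravar; lra. }
  destruct (pow_lt_1_zero (/ b) Hrb (del / (L + 2)) ltac:(apply Rdiv_lt_0_compat; lra)) as [k0 Hk0].
  exists k0. intros k Hk. specialize (Hk0 k Hk).
  pose proof (bk_pos k) as HBp. set (B := b ^ k) in *.
  rewrite Rabs_pos_eq in Hk0 by (left; apply pow_lt; apply Rinv_0_lt_compat; lra).
  rewrite pow_inv in Hk0. fold B in Hk0.
  assert (HB : (L + 2) / B < del).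
  { apply Rmult_lt_reg_r with (/ (L + 2)). apply Rinv_0_lt_compat; lra.
    replace ((L + 2) / B * / (L + 2)) with (/ B) by (field; lra). exact Hk0. }
  assert (Hak : 0 < a ^ k) by (apply pow_lt; lra).
  assert (HaB : a ^ k <= B) by (apply pow_incr; lra).
  destruct (tau_small a ha (/ (8 * L * a ^ k)) ltac:(apply Rinv_0_lt_compat; nra)) as [N HN].
  set (J := Nat.max N k).
  assert (HJk : (k <= J)%nat) by (unfold J; lia).
  assert (HtJ : tau a J < / (8 * L * a ^ k)) by (apply HN; unfold J; lia).
  pose proof (tau_pos a ha J) as HtJ0.
  set (F := fun u => phi h u * (sum_f_R0 (tm a b c (t0 + (u + al) / B)) J - (f t0 + l * ((u + al) / B)))).
  assert (HI : is_RInt F (-L) L (sum_f_R0 (gk k al) J)).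
  { apply isR_ext with (fun u => phi h u * sum_f_R0 (tm a b c (t0 + (u + al) / B)) J - phi h u * (f t0 + l * ((u + al) / B)))
      (sum_f_R0 (gk k al) J - 0).
    - intros u. unfold F. ring.
    - ring.
    - apply isR_minus. apply psum_int. apply aff_int. }
  assert (Hpt : forall u, -L <= u <= L -> Rabs (F u) <= tau a J + eps * ((L + 2) / B)).
  { intros u Hu. unfold F. rewrite Rabs_mult.
    set (y := (u + al) / B).
    assert (Hy : Rabs y <= (L + 2) / B).
    { unfold y. unfold Rdiv. rewrite Rabs_mult, (Rabs_pos_eq (/ B)) by (left; apply Rinv_0_lt_compat; lra).
      apply Rmult_le_compat_r. left; apply Rinv_0_lt_compat; lra. apply Rabs_le. lra. }
    assert (H1 : Rabs (f (t0 + y) - sum_f_R0 (tm a b c (t0 + y)) J) <= tau a J) by (apply tail_bound; auto).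
    assert (H2 : Rabs (f (t0 + y) - f t0 - l * y) <= eps * ((L + 2) / B)).
    { destruct (Req_dec y 0) as [Ey|Ey].
      - rewrite Ey, Rplus_0_r. replace (f t0 - f t0 - l * 0) with 0 by ring. rewrite Rabs_R0.
        apply Rmult_le_pos. lra. apply Rdiv_le_0_compat; lra.
      - specialize (Hdel y Ey ltac:(lra)).
        replace (f (t0 + y) - f t0 - l * y) with (y * ((f (t0 + y) - f t0) / y - l)) by (field; auto).
        rewrite Rabs_mult. rewrite Rmult_comm. apply Rmult_le_compat; try apply Rabs_pos; lra. }
    pose proof (phi_bound h u).
    assert (Rabs (sum_f_R0 (tm a b c (t0 + y)) J - (f t0 + l * y)) <= tau a J + eps * ((L + 2) / B)).
    { replace (sum_f_R0 (tm a b c (t0 + y)) J - (f t0 + l * y)) with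
        (- (f (t0 + y) - sum_f_R0 (tm a b c (t0 + y)) J) + (f (t0 + y) - f t0 - l * y)) by ring.
      eapply Rle_trans. apply Rabs_triang. rewrite Rabs_Ropp. lra. }
    apply Rle_trans with (1 * (tau a J + eps * ((L + 2) / B))).
    apply Rmult_le_compat; try apply Rabs_pos; lra. lra. }
  assert (HR : Rabs (sum_f_R0 (gk k al) J) <= (L - - L) * (tau a J + eps * ((L + 2) / B))).
  { rewrite <- (is_RInt_unique F (-L) L _ HI). apply abs_RInt_le_const. lra.
    exists (sum_f_R0 (gk k al) J). exact HI. exact Hpt. }
  pose proof (est_sum k al J HJk) as HE.
  fold B in HE.
  replace (B / B * al) with al in HE by (field; lra).
  assert (Hc : Rabs (cos (B * t0 + c + al) * (L / 2)) <= 1 + a ^ k * Rabs (sum_f_R0 (gk k al) J)).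
  { replace (cos (B * t0 + c + al) * (L / 2)) with
      (- (a ^ k * sum_f_R0 (gk k al) J - cos (B * t0 + c + al) * (L / 2)) + a ^ k * sum_f_R0 (gk k al) J) by ring.
    eapply Rle_trans. apply Rabs_triang. rewrite Rabs_Ropp, Rabs_mult, (Rabs_pos_eq (a ^ k)) by lra. lra. }
  rewrite Rabs_mult, (Rabs_pos_eq (L / 2)) in Hc by lra.
  assert (Hm : a ^ k * Rabs (sum_f_R0 (gk k al) J) <= 1 / 2).
  { eapply Rle_trans. apply Rmult_le_compat_l. lra. exact HR.
    replace (L - - L) with (2 * L) by ring.
    replace (a ^ k * (2 * L * (tau a J + eps * ((L + 2) / B))))
      with (2 * L * (a ^ k * tau a J) + 2 * L * eps * (L + 2) * (a ^ k / B)) by (field; lra).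
    assert (a ^ k * tau a J <= / (8 * L)).
    { apply Rmult_lt_compat_l with (r := a ^ k) in HtJ; [|lra].
      replace (a ^ k * / (8 * L * a ^ k)) with (/ (8 * L)) in HtJ by (field; lra). lra. }
    assert (a ^ k / B <= 1) by (apply Rmult_le_reg_r with B; [lra|]; unfold Rdiv; rewrite Rmult_assoc, Rinv_l; lra).
    assert (E2 : 2 * L * eps * (L + 2) = / 4) by (unfold eps; field; lra).
    rewrite E2.
    assert (2 * L * (a ^ k * tau a J) <= / 4).
    { apply Rle_trans with (2 * L * / (8 * L)). apply Rmult_le_compat_l; lra. right; field; lra. }
    assert (0 <= a ^ k / B) by (apply Rdiv_le_0_compat; lra).
    lra. }
  lra.
Qed.

End Main.

Lemma nondiff (a b c : R) (ha : 1 < a) (hab : a <= b) (f : R -> R)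
  (Hf : forall t, infinite_sum (tm a b c t) (f t)) (t0 : R) : ~ differentiable_at f t0.
Proof.
  intros [l Hd].
  assert (hb : 1 < b) by lra.
  set (c0 := 1 - / (b * b)).
  assert (Hq : / (b * b) * (b * b) = 1) by (field; lra).
  assert (Hq0 : 0 < / (b * b)) by (apply Rinv_0_lt_compat; nra).
  assert (Hq1 : / (b * b) < 1) by (rewrite <- Rinv_1; apply Rinv_lt_contravar; nra).
  assert (Hc0 : 0 < c0) by (unfold c0; lra).
  set (X := c0 * c0 * c0 * (b - 1)).
  assert (HX : 0 < X) by (unfold X; apply Rmult_lt_0_compat; [|lra]; apply Rmult_lt_0_compat; [|lra]; apply Rmult_lt_0_compat; lra).
  destruct (nat_unbounded (2 + 6 / c0 + 48 / X)) as [K HKx].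
  assert (H6 : 0 < 6 / c0) by (apply Rdiv_lt_0_compat; lra).
  assert (H48 : 0 < 48 / X) by (apply Rdiv_lt_0_compat; lra).
  assert (HK : (2 <= K)%nat).
  { assert (INR 1 < INR K) by (simpl; lra). apply INR_lt in H. lia. }
  assert (HK2 : 2 < INR K) by lra.
  assert (HKc : 6 < INR K * c0).
  { apply Rmult_lt_reg_r with (/ c0). apply Rinv_0_lt_compat; lra.
    replace (INR K * c0 * / c0) with (INR K) by (field; lra). unfold Rdiv in H6. lra. }
  assert (HKX : 48 < INR K * X).
  { apply Rmult_lt_reg_r with (/ X). apply Rinv_0_lt_compat; lra.
    replace (INR K * X * / X) with (INR K) by (field; lra). unfold Rdiv in H48. lra. }
  set (h := / (2 * INR K)).
  assert (Hh0 : 0 < h) by (unfold h; apply Rinv_0_lt_compat; lra).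
  assert (Hhc : h * c0 * INR K * 2 = c0) by (unfold h; field; lra).
  assert (Hh : h <= c0 / 6) by nra.
  assert (Hh4 : h <= / 4) by (unfold h; apply Rinv_le_contravar; lra).
  assert (Hbq : 1 - / (b * b) <= b * b - 1) by nra.
  assert (Hh1 : (1 + h) * (1 + h) <= (1 + b * b) / 2) by (unfold c0 in Hh; nra).
  assert (Hh2 : (1 + / (b * b)) / 2 <= (1 - h) * (1 - h)) by (unfold c0 in Hh; nra).
  pose proof PI_4 as HPI4. pose proof PI2_3_2.
  assert (HQ : 2 * (8 * (2 * INR K * PI + 1) * (h * h) / (c0 * c0 * c0)) * / b / (1 - / b) <= 1).
  { replace (2 * (8 * (2 * INR K * PI + 1) * (h * h) / (c0 * c0 * c0)) * / b / (1 - / b))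
      with (4 * (2 * INR K * PI + 1) / (INR K * (INR K * X))) by (unfold h, X; field; repeat split; lra).
    apply Rmult_le_reg_r with (INR K * (INR K * X)). nra.
    unfold Rdiv. rewrite Rmult_assoc, Rinv_l by nra. nra. }
  destruct (main_est a b c ha hab K HK Hh1 Hh2 HQ f Hf t0 l Hd 0 ltac:(lra)) as [k0 Hk0].
  destruct (main_est a b c ha hab K HK Hh1 Hh2 HQ f Hf t0 l Hd (PI / 2) ltac:(lra)) as [k1 Hk1].
  set (k := Nat.max k0 k1).
  specialize (Hk0 k ltac:(unfold k; lia)). specialize (Hk1 k ltac:(unfold k; lia)).
  set (x := b ^ k * t0 + c) in *.
  rewrite Rplus_0_r in Hk0.
  rewrite cos_plus, cos_PI2, sin_PI2 in Hk1.
  replace (cos x * 0 - sin x * 1) with (- sin x) in Hk1 by ring. rewrite Rabs_Ropp in Hk1.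
  assert (HL : 12 < 2 * INR K * PI) by nra.
  assert (Hc : Rabs (cos x) < /4) by nra.
  assert (Hs : Rabs (sin x) < /4) by nra.
  pose proof (sin2_cos2 x). unfold Rsqr in H0.
  apply Rabs_def2 in Hc. apply Rabs_def2 in Hs. nra.
Qed.

Lemma isum_ext (u v : nat -> R) (l : R) : (forall j, u j = v j) -> infinite_sum u l -> infinite_sum v l.
Proof.
  intros E H eps He. destruct (H eps He) as [N HN]. exists N. intros n Hn.
  rewrite <- (sum_eq u v n) by (intros; apply E). apply HN; auto.
Qed.

Lemma W_eq a b t j : W_term a b t j = tm a b 0 t j.
Proof. unfold W_term, tm. rewrite Rplus_0_r. reflexivity. Qed.
Lemma S_eq a b t j : S_term a b t j = tm a b (- (PI / 2)) t j.
Proof.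
  unfold S_term, tm. f_equal.
  replace (b ^ j * t + - (PI / 2)) with (b ^ j * t - PI / 2) by ring.
  rewrite cos_minus, cos_PI2, sin_PI2. ring.
Qed.

Lemma package (a b c : R) (ha : 1 < a) (hab : a <= b) (g : R -> R) :
  (forall t, infinite_sum (tm a b c t) (g t)) ->
  bounded_R g /\ continuity g /\ forall t0 : R, ~ differentiable_at g t0.
Proof.
  intros Hg. split; [|split].
  - exists (1 + tau a 0). apply (sum_bounded a b c ha g Hg).
  - apply (sum_cont a b c ha g Hg).
  - intros t0. apply (nondiff a b c ha hab g Hg).
Qed.

Theorem theorem1p1 (a b : R) (ha : 1 < a) (hab : a <= b) :
  (forall t : R, exists l : R, infinite_sum (W_term a b t) l) /\
  (forall t : R, exists l : R, infinite_sum (S_term a b t) l) /\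
  (forall W : R -> R, (forall t : R, infinite_sum (W_term a b t) (W t)) ->
     bounded_R W /\ continuity W /\ forall t0 : R, ~ differentiable_at W t0) /\
  (forall S : R -> R, (forall t : R, infinite_sum (S_term a b t) (S t)) ->
     bounded_R S /\ continuity S /\ forall t0 : R, ~ differentiable_at S t0).
Proof.
  split; [|split; [|split]].
  - intros t. destruct (sum_exists a b 0 ha t) as [l Hl]. exists l.
    apply (isum_ext (tm a b 0 t)). intros j; symmetry; apply W_eq. exact Hl.
  - intros t. destruct (sum_exists a b (- (PI / 2)) ha t) as [l Hl]. exists l.
    apply (isum_ext (tm a b (- (PI / 2)) t)). intros j; symmetry; apply S_eq. exact Hl.
  - intros W HW. apply (package a b 0 ha hab W). intros t.
    apply (isum_ext (W_term a b t)). intros j; apply W_eq. apply HW.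
  - intros S HS. apply (package a b (- (PI / 2)) ha hab S). intros t.
    apply (isum_ext (S_term a b t)). intros j; apply S_eq. apply HS.
Qed.
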